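(* Let $d\ge2$, $\mathbf u,\mathbf w\in\mathcal C_{d-1}$ with $\bar w_i>0$ for all $i\in\{1,\dots,d\}$, and $\mathbf r\in[0,1]^d\setminus\{\mathbf 0\}$. For $f(\mathbf x)=-\log\langle\mathbf r,\bar{\mathbf x}\rangle$, we have $$|\langle\nabla f(\mathbf w),\mathbf u-\mathbf w\rangle|\le 1\vee\max_{i\in[d]}\frac{\bar u_i}{\bar w_i}.$$
   Context: $\mathcal C_{d-1}=\{\mathbf u\in\mathbb R^{d-1}:u_i\ge0,\ \sum_iu_i\le1\}$. For $\mathbf v\in\mathbb R^{d-1}$, $\bar{\mathbf v}=(v_1,\dots,v_{d-1},1-\sum_{i=1}^{d-1}v_i)\in\mathbb R^d$. $a\vee b=\max(a,b)$ and $[d]=\{1,\dots,d\}$. *)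

(* Defs.v *)
From HB Require Import structures.
From mathcomp Require Import all_boot all_order all_algebra.
From mathcomp Require Import all_classical all_reals all_analysis.
Set Implicit Arguments. Unset Strict Implicit. Unset Printing Implicit Defensive.
Import Order.TTheory GRing.Theory Num.Theory.
Import numFieldNormedType.Exports.
Local Open Scope ring_scope.

(* The simplex C_n = { u in R^n : u_i >= 0, sum_i u_i <= 1 } (n = d-1). *)
Definition simplexC (R : realType) (n : nat) (u : 'rV[R]_n) : Prop :=
  (forall i, 0 <= u 0 i) /\ \sum_i u 0 i <= 1.

(* bar v = (v_1, ..., v_n, 1 - sum_i v_i) in R^(n+1); the last coordinate is ord_max. *)
Definition vbar (R : realType) (n : nat) (v : 'rV[R]_n) : 'rV[R]_n.+1 :=
  \row_(i < n.+1) match unlift ord_max i with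
                  | Some j => v 0 j
                  | None => 1 - \sum_k v 0 k
                  end.

Definition dotv (R : realType) (m : nat) (a b : 'rV[R]_m) : R :=
  \sum_i a 0 i * b 0 i.

Definition grad (R : realType) (n : nat) (f : 'rV[R]_n -> R) (w : 'rV[R]_n)
  : 'rV[R]_n :=
  \row_(j < n) derive f w (delta_mx 0 j).

Definition flog (R : realType) (n : nat) (r : 'rV[R]_n.+1) (x : 'rV[R]_n) : R :=
  - ln (dotv r (vbar x)).

(* Main.v *)
Require Import Defs.
From HB Require Import structures.
From mathcomp Require Import all_boot all_order all_algebra.
From mathcomp Require Import all_classical all_reals all_analysis.
Import Order.TTheory GRing.Theory Num.Theory.
Import numFieldNormedType.Exports.
Local Open Scope ring_scope.

Lemma widen_lift n (i : 'I_n) : widen_ord (leqnSn n) i = lift ord_max i.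
Proof. by apply: val_inj; rewrite /= /bump leqNgt ltn_ord. Qed.

Lemma S_expand (R : realType) (n : nat) (r : 'rV[R]_n.+1) (x : 'rV[R]_n) :
  dotv r (vbar x) = r 0 ord_max +
    \sum_j (r 0 (lift ord_max j) - r 0 ord_max) * x 0 j.
Proof.
rewrite /dotv big_ord_recr /= /vbar !mxE unlift_none.
under eq_bigr => i _ do rewrite mxE widen_lift liftK.
rewrite mulrBr mulr1 addrC -addrA; congr (_ + _).
rewrite addrC mulr_sumr -sumrB; apply: eq_bigr => i _; rewrite mulrBl.
done.
Qed.

Lemma deriv_aff (R : realType) (s c : R) :
  is_derive (0:R) (1:R) (fun h : R => s + c * h) c.
Proof.
have H : is_derive (0:R) (1:R) (cst s + c \*: (@id R)) (0 + c *: 1).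
  apply: is_deriveD; exact: is_deriveZ.
rewrite add0r in H.
have -> : (fun h : R => s + c * h) = cst s + c \*: (@id R) by apply/funext.
have E : c%:A = c :> R by rewrite /GRing.scale /= mulr1.
by rewrite E in H.
Qed.

Lemma deriv_g (R : realType) (s c : R) : 0 < s ->
  is_derive (0:R) (1:R) (fun h : R => - ln (s + c * h)) (- (s^-1 * c)).
Proof.
move=> s0.
have H := @is_derive1_comp R (@ln R) (fun h : R => s + c * h) 0 (s + c * 0)^-1 c.
rewrite mulr0 addr0 in H.

have H2 := is_deriveN (H (is_derive1_ln s0) (@deriv_aff R s c)).
have -> : (fun h : R => - ln (s + c * h)) = - ((@ln R) \o (fun h : R => s + c * h)) by apply/funext.
exact: H2.
Qed.

Lemma derive_flog (R : realType) (n : nat) (r : 'rV[R]_n.+1) (w : 'rV[R]_n) j :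
  0 < dotv r (vbar w) ->
  derive (flog r) w (delta_mx 0 j) =
  - ((dotv r (vbar w))^-1 * (r 0 (lift ord_max j) - r 0 ord_max)).
Proof.
set s := dotv r (vbar w); set c := r 0 (lift ord_max j) - r 0 ord_max.
move=> s0.
have E : forall h : R, flog r (h *: delta_mx 0 j + w) = - ln (s + c * h).
  move=> h; rewrite /flog /s !S_expand; congr (- ln _).
  rewrite -addrA; congr (_ + _).
  under eq_bigr => k _ do rewrite !mxE eqxx /= mulrDr.
  rewrite big_split /= addrC; congr (_ + _).
  rewrite (bigD1 j) //= eqxx mulr1 big1 ?addr0; first by rewrite /c mulrC.
  by move=> k /negbTE; rewrite eq_sym => ->; rewrite mulr0 mulr0.
have E0 : flog r w = - ln (s + c * 0).
  by rewrite -E scale0r add0r.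
have -> : derive (flog r) w (delta_mx 0 j) = derive (fun h : R => - ln (s + c * h)) 0 1.
  rewrite /derive; f_equal; f_equal; apply/funext => h /=.
  by rewrite E E0 addr0 /GRing.scale /= mulr1.
by rewrite (@derive_val _ _ _ _ _ _ _ (@deriv_g R s c s0)).
Qed.

Lemma vbar_ge0 (R : realType) (n : nat) (u : 'rV[R]_n) :
  simplexC u -> forall i, 0 <= vbar u 0 i.
Proof.
move=> [h1 h2] i; rewrite /vbar mxE; case: (unlift ord_max i) => [j|] //.
by rewrite subr_ge0.
Qed.

From mathcomp Require Import lra.

Theorem lemma16 (R : realType) (n : nat) (hn : (1 <= n)%N)
  (u w : 'rV[R]_n) (r : 'rV[R]_n.+1)
  (hu : simplexC u) (hw : simplexC w)
  (hwpos : forall i, 0 < vbar w 0 i)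
  (hr01 : forall i, 0 <= r 0 i <= 1) (hr0 : r != 0) :
  `| dotv (grad (flog r) w) (u - w) |
    <= \big[Num.max/1]_(i < n.+1) (vbar u 0 i / vbar w 0 i).
Proof.
set M := \big[Num.max/1]_(i < n.+1) _.
have r0 : forall i, 0 <= r 0 i by move=> i; case/andP: (hr01 i).
have [i0 ri0] : exists i, r 0 i != 0.
  case/boolP: [exists i, r 0 i != 0] => [/existsP//|/existsPn H].
  move: hr0; have -> : r = 0; last by rewrite eqxx.
  by apply/matrixP => a b; rewrite ord1 mxE; apply/eqP; move: (H b); rewrite negbK.
set s := dotv r (vbar w).
have s0 : 0 < s.
  rewrite /s /dotv (bigD1 i0) //=.
  have t0 : 0 < r 0 i0 * vbar w 0 i0.
    by apply: mulr_gt0 => //; rewrite lt_def ri0 r0.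
  have : 0 <= \sum_(i < n.+1 | i != i0) r 0 i * vbar w 0 i.
    by apply: sumr_ge0 => i _; apply: mulr_ge0 => //; exact: ltW.
  lra.
set D := \sum_j (r 0 (lift ord_max j) - r 0 ord_max) * (u 0 j - w 0 j).
have HD : dotv (grad (flog r) w) (u - w) = - (s^-1 * D).
  rewrite /dotv /D mulr_sumr -sumrN; apply: eq_bigr => j _.
  rewrite !mxE derive_flog //. rewrite -/s. by rewrite mulrA mulNr.
have HSu : dotv r (vbar u) = s + D.
  rewrite /s !S_expand /D -addrA; congr (_ + _).
  rewrite -big_split /=; apply: eq_bigr => j _; rewrite mulrBr; lra.
have Su0 : 0 <= dotv r (vbar u).
  by rewrite /dotv; apply: sumr_ge0 => i _; apply: mulr_ge0 => //; exact: vbar_ge0.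
have M1 : 1 <= M by exact: bigmax_ge_id.
have SuM : dotv r (vbar u) <= M * s.
  rewrite /s /dotv mulr_sumr; apply: ler_sum => i _.
  rewrite mulrCA; apply: ler_wpM2l => //.
  rewrite -ler_pdivrMr //; exact: le_bigmax.
rewrite HD; set q := s^-1 * D.
have Dq : D = q * s by rewrite /q mulrAC mulVf ?mul1r // gt_eqF.
rewrite Dq in HSu.
rewrite ler_norml; apply/andP; split; nra.
Qed.
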